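(* Let $\rho$ be an $m$-qubit density matrix, and let $\eta,\varepsilon\in\mathbb R$ and $b>0$ satisfy $\eta-\varepsilon-\frac1b>0$. Let $\mathcal C$ be a finite set of $m$-qubit pure product states such that (1) $\langle\pi|\rho|\pi\rangle\ge\eta-\varepsilon$ for all $|\pi\rangle\in\mathcal C$, and (2) $d_{\tan}(|\pi\rangle,|\pi'\rangle)\ge b$ for all distinct $|\pi\rangle,|\pi'\rangle\in\mathcal C$. Then $|\mathcal C|\le\frac{1}{\eta-\varepsilon-\frac1b}$.
   Context: For pure product states $|\pi\rangle=\bigotimes_{i=1}^m|\pi_i\rangle$ and $|\pi'\rangle=\bigotimes_{i=1}^m|\pi'_i\rangle$ (each $|\pi_i\rangle,|\pi'_i\rangle\in\mathbb{C}^2$ a unit vector), the tangent distance is $d_{\tan}(|\pi\rangle,|\pi'\rangle)=\Big(\sum_{i=1}^m\frac{1-|\langle\pi_i|\pi'_i\rangle|^2}{|\langle\pi_i|\pi'_i\rangle|^2}\Big)^{1/2}$ (a summand is $+\infty$ if $\langle\pi_i|\pi'_i\rangle=0$); equivalently, for $|\pi_{\vec z}\rangle=\bigotimes_i\frac{|0\rangle+z_i|1\rangle}{\sqrt{1+|z_i|^2}}$ it equals $\big(\sum_i|\frac{z_i-a_i}{1+z_i^*a_i}|^2\big)^{1/2}$. Distinct states are distinct up to global phase. *)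

(* Defs.v *)
From HB Require Import structures.
From mathcomp Require Import all_boot all_order all_algebra.
From mathcomp Require Import complex.
From mathcomp Require Import constructive_ereal.
Set Implicit Arguments. Unset Strict Implicit. Unset Printing Implicit Defensive.
Import Order.TTheory GRing.Theory Num.Theory.
Local Open Scope ring_scope.

Section QDefs.
Variable R : rcfType.
Local Notation C := R[i].

Definition csqnorm (x : C) : R := (complex.Re x) ^+ 2 + (complex.Im x) ^+ 2.

Definition cinner (n : nat) (u v : 'cV[C]_n) : C :=
  \sum_(k < n) conjc (u k 0) * v k 0.

Definition adjmx (n p : nat) (A : 'M[C]_(n, p)) : 'M[C]_(p, n) :=
  \matrix_(i, j) conjc (A j i).

Definition density_matrix (n : nat) (rho : 'M[C]_n) : Prop :=
  [/\ adjmx rho = rho,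
      (forall v : 'cV[C]_n, 0 <= cinner v (rho *m v)) &
      \tr rho = 1].

Definition unit_vector (n : nat) (v : 'cV[C]_n) : Prop := cinner v v = 1.

(* a description of an m-qubit pure product state by its m single-qubit factors *)
Definition prod_factors (m : nat) := 'I_m -> 'cV[C]_2.

(* i-th bit of the computational-basis index j; qubit i is bit i of j *)
Definition qbit (m : nat) (j : 'I_(2 ^ m)) (i : 'I_m) : 'I_2 :=
  inord (odd (j %/ 2 ^ i)).

(* the tensor product |pi_1> (x) ... (x) |pi_m> in C^(2^m) *)
Definition prod_state (m : nat) (p : prod_factors m) : 'cV[C]_(2 ^ m) :=
  \col_(j < 2 ^ m) \prod_(i < m) p i (qbit j i) 0.

Definition expect (n : nat) (rho : 'M[C]_n) (v : 'cV[C]_n) : C :=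
  cinner v (rho *m v).

Definition dtan (m : nat) (p q : prod_factors m) : \bar R :=
  if [exists i : 'I_m, cinner (p i) (q i) == 0] then +oo%E
  else (Num.sqrt (\sum_(i < m)
          (1 - csqnorm (cinner (p i) (q i))) / csqnorm (cinner (p i) (q i))))%:E.

End QDefs.

(* Main.v *)
Require Import Defs.
From HB Require Import structures.
From mathcomp Require Import all_boot all_order all_algebra.
From mathcomp Require Import complex.
From mathcomp Require Import constructive_ereal.
From mathcomp Require Import ring lra.
Import Order.TTheory GRing.Theory Num.Theory.
Local Open Scope ring_scope.
Lemma bits_inj (m j j' : nat) : (j < 2 ^ m)%N -> (j' < 2 ^ m)%N ->
  (forall i, (i < m)%N -> odd (j %/ 2 ^ i) = odd (j' %/ 2 ^ i)) -> j = j'.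
Proof.
elim: m j j' => [|m IH] j j'.
  by rewrite expn0 !ltnS !leqn0 => /eqP-> /eqP->.
move=> hj hj' h.
have h0 := h 0%N isT; rewrite expn0 !divn1 in h0.
have e : j./2 = j'./2.
  apply: IH.
  - by rewrite -divn2 ltn_divLR // -expnSr.
  - by rewrite -divn2 ltn_divLR // -expnSr.
  move=> i hi; rewrite -!divn2 -!divnMA -expnS; exact: h.
by rewrite -(odd_double_half j) -(odd_double_half j') h0 e.
Qed.

Lemma prod_bound (R : rcfType) n (x : 'I_n -> R) : (forall i, 0 < x i <= 1) ->
  (\prod_i x i <= 1) && (\prod_i x i * (1 + \sum_i (1 - x i) / x i) <= 1).
Proof.
elim: n x => [|n IH] x hx.
  by rewrite !big_ord0 addr0 mulr1 lexx.
rewrite !big_ord_recr /=.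
have /andP[h1 h2] := IH (fun i => x (widen_ord (leqnSn n) i)) (fun i => hx _).
set X := \prod_(i < n) _ in h1 h2 *; set S := \sum_(i < n) _ in h1 h2 *.
have /andP[xp x1] := hx ord_max.
set y := x ord_max in xp x1 *.
have X0 : 0 <= X by apply: prodr_ge0 => i _; have /andP[/ltW] := hx (widen_ord (leqnSn n) i).
have ht : y * ((1 - y) / y) = 1 - y by rewrite mulrC divfK // gt_eqF.
set t := (1 - y) / y in ht *.
apply/andP; split; nra.
Qed.

Section Q.
Variable R : rcfType.
Local Notation C := R[i].

Lemma conjCc (x : C) : (x^*)%R = conjc x.
Proof.
have h : (x^*)%R = 2 * 'Re x - x by rewrite ReE; field.
rewrite h -complexRe; case: x {h} => a b /=.
apply/eqP; rewrite eq_complex /=; simpc; rewrite andbT; apply/eqP; ring.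
Qed.

Lemma cinnerE n (u v : 'cV[C]_n) : cinner u v = \sum_k (u k 0)^* * v k 0.
Proof. by apply: eq_bigr => k _; rewrite conjCc. Qed.

Definition bitsf (m : nat) (j : 'I_(2 ^ m)) : {ffun 'I_m -> 'I_2} :=
  [ffun i => qbit j i].

Lemma bitsf_bij m : bijective (@bitsf m).
Proof.
apply: inj_card_bij; last by rewrite card_ffun !card_ord.
move=> j j' /ffunP h; apply/val_inj/(@bits_inj m); [exact: ltn_ord|exact: ltn_ord|] => i hi.
have := h (Ordinal hi); rewrite !ffunE /qbit => /(congr1 val) /=.
rewrite !inordK ?ltnS ?leq_b1 //; by do 2 case: odd.
Qed.

Lemma cinner_prod m (p q : prod_factors R m) :
  cinner (prod_state p) (prod_state q) = \prod_i cinner (p i) (q i).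
Proof.
rewrite cinnerE.
under [RHS]eq_bigr do rewrite cinnerE.
rewrite bigA_distr_bigA /=.
rewrite (reindex (@bitsf m)); last first.
  by case: (bitsf_bij m) => g h1 h2; exists g => x _; [exact: h1|exact: h2].
apply: eq_bigr => j _; rewrite !mxE rmorph_prod -big_split /=.
by apply: eq_bigr => i _; rewrite ffunE.
Qed.
Lemma cinnerC n (u v : 'cV[C]_n) : cinner v u = (cinner u v)^*.
Proof.
rewrite !cinnerE rmorph_sum; apply: eq_bigr => k _.
by rewrite rmorphM /= conjCK mulrC.
Qed.

Lemma cinnerDr n (u v w : 'cV[C]_n) : cinner u (v + w) = cinner u v + cinner u w.
Proof. by rewrite !cinnerE -big_split; apply: eq_bigr => k _; rewrite mxE mulrDr. Qed.

Lemma cinnerZr n (u v : 'cV[C]_n) a : cinner u (a *: v) = a * cinner u v.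
Proof. by rewrite !cinnerE mulr_sumr; apply: eq_bigr => k _; rewrite mxE mulrCA. Qed.

Lemma cinnerDl n (u v w : 'cV[C]_n) : cinner (v + w) u = cinner v u + cinner w u.
Proof. by rewrite cinnerC cinnerDr rmorphD /= -!cinnerC. Qed.

Lemma cinnerZl n (u v : 'cV[C]_n) a : cinner (a *: v) u = a^* * cinner v u.
Proof. by rewrite cinnerC cinnerZr rmorphM /= -!cinnerC. Qed.

Lemma cinner_sumr n p (u : 'cV[C]_n) (a : 'I_p -> C) (v : 'I_p -> 'cV[C]_n) :
  cinner u (\sum_k a k *: v k) = \sum_k a k * cinner u (v k).
Proof.
rewrite cinnerE.
under eq_bigr do rewrite summxE mulr_sumr.
rewrite exchange_big /=; apply: eq_bigr => k _.
by rewrite cinnerE mulr_sumr; apply: eq_bigr => i _; rewrite mxE mulrCA.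
Qed.

Lemma cinner_suml n p (u : 'cV[C]_n) (a : 'I_p -> C) (v : 'I_p -> 'cV[C]_n) :
  cinner (\sum_k a k *: v k) u = \sum_k (a k)^* * cinner (v k) u.
Proof.
rewrite cinnerC cinner_sumr rmorph_sum; apply: eq_bigr => k _.
by rewrite rmorphM /= -cinnerC.
Qed.

Lemma cinner_normE n (u : 'cV[C]_n) : cinner u u = \sum_k `|u k 0| ^+ 2.
Proof. by rewrite cinnerE; apply: eq_bigr => k _; rewrite normCKC. Qed.

Lemma cinner_ge0 n (u : 'cV[C]_n) : 0 <= cinner u u.
Proof. by rewrite cinner_normE; apply: sumr_ge0 => k _; rewrite exprn_ge0. Qed.

Lemma cinner_adj n p (A : 'M[C]_(p, n)) (v : 'cV[C]_n) (y : 'cV[C]_p) :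
  cinner v (map_mx Num.Def.conjC A^T *m y) = cinner (A *m v) y.
Proof.
rewrite !cinnerE.
under eq_bigr do rewrite mxE mulr_sumr.
rewrite exchange_big /=; apply: eq_bigr => j _.
rewrite mxE rmorph_sum mulr_suml; apply: eq_bigr => i _.
by rewrite !mxE rmorphM mulrCA mulrA mulrC.
Qed.
Lemma cs2_aux (a b c d : C) : `|0 + a^* * c + b^* * d| ^+ 2 <=
  (0 + a^* * a + b^* * b) * (0 + c^* * c + d^* * d).
Proof.
rewrite !add0r -subr_ge0.
have -> : ((a^* * a + b^* * b) * (c^* * c + d^* * d) - `|a^* * c + b^* * d| ^+ 2)
   = `|a * d - b * c| ^+ 2.
  rewrite !normCK !rmorphD ?rmorphB ?rmorphN /= !rmorphM /= !conjCK; ring.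
exact: exprn_ge0.
Qed.

Lemma cs2 (u v : 'cV[C]_2) : `|cinner u v| ^+ 2 <= cinner u u * cinner v v.
Proof. rewrite !cinnerE !big_ord_recr !big_ord0 /=; exact: cs2_aux. Qed.

Lemma cs2_unit (u v : 'cV[C]_2) : unit_vector u -> unit_vector v ->
  `|cinner u v| ^+ 2 <= 1.
Proof. by move=> hu hv; have := cs2 u v; rewrite hu hv mulr1. Qed.

Lemma csqnormE (z : C) : (csqnorm z)%:C%C = `|z| ^+ 2.
Proof. by rewrite /csqnorm add_Re2_Im2. Qed.

Lemma overlap m (p q : prod_factors R m) (b : R) : 0 < b ->
  (forall i, unit_vector (p i)) -> (forall i, unit_vector (q i)) ->
  (b%:E <= dtan p q)%E ->
  `|cinner (prod_state p) (prod_state q)| <= (b^-1)%:C%C.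
Proof.
move=> b0 hp hq; rewrite cinner_prod /dtan.
have binv0 : 0 <= (b^-1)%:C%C by rewrite ler0c invr_ge0 ltW.
case: ifP => [/existsP [i /eqP zi] _ | /negbT hz].
  suff -> : \prod_i cinner (p i) (q i) = 0 by rewrite normr0.
  by apply/eqP/prodf_eq0; exists i => //; rewrite zi.
rewrite lee_fin => hd.
set x := fun i => csqnorm (cinner (p i) (q i)).
set S := \sum_(i < m) _ in hd.
have hx : forall i, 0 < x i <= 1.
  move=> i; have nz : cinner (p i) (q i) != 0.
    by apply: contra hz => /eqP e; apply/existsP; exists i; rewrite e.
  rewrite -lecR -ltcR csqnormE cs2_unit // andbT.
  by rewrite exprn_gt0 // normr_gt0.
have hS : b ^+ 2 <= S.
  case: (ltrP S 0) => hS0.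
    by move: hd; rewrite ltr0_sqrtr // => /(lt_le_trans b0); rewrite ltxx.
  have s0 := sqrtr_ge0 S; rewrite -(sqr_sqrtr hS0).
  by rewrite ler_pXn2r // ?nnegrE ?(ltW b0).
have /andP[h1 h2] := @prod_bound R m x hx.
have P0 : 0 <= \prod_i x i by apply: prodr_ge0 => i _; have /andP[/ltW] := hx i.
have hPb : \prod_i x i <= b^-1 ^+ 2.
  have hb : b * b^-1 = 1 by rewrite mulfV // gt_eqF.
  have ib : 0 < b^-1 by rewrite invr_gt0.
  rewrite /S in hS; set P := \prod_i x i in P0 h1 h2 *.
  set S' := \sum_(i < m) _ in h2 hS. nra.
rewrite -(ler_pXn2r (n:=2)) // ?inE ?normr_ge0 //.
rewrite normr_prod -prodrXl.
under eq_bigr do rewrite -csqnormE.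
  by rewrite -rmorph_prod -rmorphXn lecR.
by rewrite nnegrE normr_ge0.
Qed.
Lemma amgm (x y : C) : 0 <= x -> 0 <= y -> x * y <= (x ^+ 2 + y ^+ 2) / 2.
Proof.
move=> x0 y0.
have r : x - y \is Num.real by rewrite rpredB ?ger0_real.
move: r; rewrite realEsqr sqrrB => h.
rewrite ler_pdivlMr ?ltr0n // -subr_ge0.
by rewrite (_ : _ - _ = x ^+ 2 - x * y *+ 2 + y ^+ 2) //; rewrite mulr_natr; ring.
Qed.

Lemma frame n N (v : 'I_n -> 'cV[C]_N) (u : 'cV[C]_N) (c : C) :
  0 <= c -> (forall k, cinner (v k) (v k) = 1) ->
  (forall k l, k != l -> `|cinner (v k) (v l)| <= c) -> cinner u u = 1 ->
  \sum_k `|cinner (v k) u| ^+ 2 <= 1 + n%:R * c.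
Proof.
move=> c0 hv hc hu.
set a := fun k => cinner (v k) u.
set T := \sum_k `|a k| ^+ 2.
have T0 : 0 <= T by apply: sumr_ge0 => k _; rewrite exprn_ge0.
set w := \sum_k a k *: v k.
have hwu : cinner w u = T.
  by rewrite cinner_suml; apply: eq_bigr => k _; rewrite normCKC.
have huw : cinner u w = T by rewrite cinnerC hwu geC0_conj.
set lam := 1 + n%:R * c.
have hQ : cinner w w <= lam * T.
  rewrite -[cinner w w]ger0_norm ?cinner_ge0 //.
  rewrite {1}/w cinner_suml.
  under eq_bigr do rewrite cinner_sumr.
  apply: le_trans (ler_norm_sum _ _ _) _.
  pose F k l := (if k == l then `|a k| ^+ 2 else 0) + c * ((`|a k| ^+ 2 + `|a l| ^+ 2) / 2).
  apply: (@le_trans _ _ (\sum_k \sum_l F k l)).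
    apply: ler_sum => k _.
    rewrite normrM norm_conjC.
    apply: le_trans (ler_wpM2l (normr_ge0 _) (ler_norm_sum _ _ _)) _.
    rewrite mulr_sumr.
    apply: ler_sum => l _; rewrite normrM /F.
    have ak := normr_ge0 (a k); have al := normr_ge0 (a l).
    case: eqP => [<-|/eqP kl].
      rewrite hv normr1 mulr1 -expr2 lerDl.
      by rewrite mulr_ge0 // divr_ge0 ?ler0n // addr_ge0 ?exprn_ge0.
    rewrite add0r.
    apply: (@le_trans _ _ (c * (`|a k| * `|a l|))).
      rewrite [c * _]mulrC -[_ * _ * c]mulrA.
      by apply: ler_wpM2l => //; apply: ler_wpM2l => //; exact: hc.
    by apply: ler_wpM2l => //; apply: amgm.
  rewrite /F.
  under eq_bigr do rewrite big_split /=.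
  rewrite big_split /=.
  have -> : \sum_k \sum_l (if k == l then `|a k| ^+ 2 else 0) = T.
    apply: eq_bigr => k _.
    rewrite (bigD1 k) //= eqxx big1 ?addr0 // => l /negbTE.
    by rewrite eq_sym => ->.
  under eq_bigr do rewrite -mulr_sumr -mulr_suml big_split /= sumr_const card_ord.
  rewrite -mulr_sumr -mulr_suml big_split /= sumr_const card_ord sumrMnl.
  have e2 : forall X : C, (X + X) / 2 = X.
    by move=> X; rewrite -mulr2n -[X *+ 2]mulr_natr mulfK // pnatr_eq0.
  rewrite e2 -/T /lam le_eqVlt; apply/orP; left; apply/eqP.
  rewrite -mulr_natr; ring.
have lam0 : 0 < lam by rewrite /lam; apply: (lt_le_trans ltr01); rewrite lerDl mulr_ge0 ?ler0n.
set s := lam^-1.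
have s0 : 0 < s by rewrite invr_gt0.
have hs : s^* = s by rewrite geC0_conj // ltW.
have key : 0 <= cinner (u - s *: w) (u - s *: w) by apply: cinner_ge0.
rewrite cinnerDl !cinnerDr -!scaleNr !cinnerZl !cinnerZr in key.
rewrite hu huw hwu rmorphN /= hs in key.
have : 0 <= 1 - s * T.
  apply: le_trans key _.
  rewrite -subr_ge0.
  have -> : 1 - s * T - (1 + - s * T + (- s * T + - s * (- s * cinner w w)))
    = s * (T - s * cinner w w) by ring.
  rewrite mulr_ge0 ?(ltW s0) // subr_ge0.
  have -> : T = s * (lam * T) by rewrite mulrA mulVf ?mul1r // gt_eqF.
  by rewrite ler_wpM2l ?(ltW s0).
rewrite subr_ge0 => h.
have -> : T = lam * (s * T) by rewrite mulrA mulfV ?mul1r // gt_eqF.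
by rewrite -[X in _ <= X]mulr1 ler_wpM2l ?(ltW lam0).
Qed.
Lemma density_bound N (rho : 'M[C]_N) n (v : 'I_n -> 'cV[C]_N) (c : C) :
  density_matrix rho -> 0 <= c -> (forall k, cinner (v k) (v k) = 1) ->
  (forall k l, k != l -> `|cinner (v k) (v l)| <= c) ->
  \sum_k expect rho (v k) <= 1 + n%:R * c.
Proof.
case=> hadj hpsd htr c0 hv hc.
have herm : map_mx Num.Def.conjC rho^T = rho.
  apply/matrixP => i j; have := congr1 (fun M : 'M[C]_N => M i j) hadj.
  by rewrite !mxE conjCc.
have normal : rho \is normalmx by apply/normalmxP; rewrite herm.
have hr := orthomx_spectralP normal.
set P := spectralmx rho in hr; set d := spectral_diag rho in hr.
have hPu : P \is unitarymx := spectral_unitarymx rho.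
rewrite invmx_unitary // in hr.
have hPP : P *m map_mx Num.Def.conjC P^T = 1%:M by apply/unitarymxP.
have hexp : forall x, expect rho x = \sum_j d 0 j * `|(P *m x) j 0| ^+ 2.
  move=> x; rewrite /expect hr -!mulmxA cinner_adj cinnerE.
  by apply: eq_bigr => j _; rewrite mul_diag_mx !mxE normCKC mulrCA.

have d0 : forall j, 0 <= d 0 j.
  move=> j; have := hpsd (map_mx Num.Def.conjC P^T *m delta_mx j 0).
  rewrite -/(expect rho _) hexp mulmxA hPP mul1mx.
  rewrite (bigD1 j) //= big1 ?addr0.
    by rewrite !mxE !eqxx /= normr1 expr1n mulr1.
  by move=> i /negbTE hi; rewrite !mxE hi /= normr0 expr0n /= mulr0.
have dsum : \sum_j d 0 j = 1.
  rewrite -htr hr mxtrace_mulC mulmxA hPP mul1mx mxtrace_diag.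
  by [].
set lam := 1 + n%:R * c.
pose u j := \col_i ((P j i)^* ).
have hPu' : forall j x, (P *m x) j 0 = cinner (u j) x.
  by move=> j x; rewrite cinnerE !mxE; apply: eq_bigr => i _; rewrite !mxE conjCK.
have huu : forall j, cinner (u j) (u j) = 1.
  move=> j; have e : (1%:M : 'M[C]_N) j j = 1 by rewrite mxE eqxx.
  rewrite -e -hPP mxE cinnerE; apply: eq_bigr => i _.
  by rewrite !mxE conjCK.
under eq_bigr do rewrite hexp.
rewrite exchange_big /=.
apply: (@le_trans _ _ (\sum_j d 0 j * lam)); last first.
  by rewrite -mulr_suml dsum mul1r.
apply: ler_sum => j _; rewrite -mulr_sumr ler_wpM2l //.
under eq_bigr do rewrite hPu' cinnerC norm_conjC.
exact: frame.
Qed.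
End Q.

Theorem claim5p3 (R : rcfType) (m : nat) (rho : 'M[R[i]]_(2 ^ m))
  (eta eps b : R) (n : nat) (P : 'I_n -> prod_factors R m) :
  density_matrix rho ->
  0 < b ->
  0 < eta - eps - b^-1 ->
  (forall k i, unit_vector (P k i)) ->
  (forall k, ((eta - eps)%:C)%C <= expect rho (prod_state (P k))) ->
  (forall k l, k != l -> (b%:E <= dtan (P k) (P l))%E) ->
  n%:R <= (eta - eps - b^-1)^-1.
Proof.
move=> hrho b0 hpos hunit hexp hd.
set v := fun k => prod_state (P k).
have hv : forall k, cinner (v k) (v k) = 1.
  by move=> k; rewrite /v cinner_prod big1 // => i _; apply: hunit.
have hc : forall k l, k != l -> `|cinner (v k) (v l)| <= (b^-1)%:C%C.
  by move=> k l kl; apply: (@overlap R) => //; apply: hd.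
have c0 : 0 <= (b^-1)%:C%C by rewrite ler0c invr_ge0 ltW.
have up := @density_bound R _ rho n v _ hrho c0 hv hc.
have low : \sum_(k < n) ((eta - eps)%:C%C) <= \sum_k expect rho (v k).
  by apply: ler_sum => k _; apply: hexp.
have := le_trans low up; rewrite sumr_const card_ord => h0.
have h1 : (((eta - eps) *+ n)%:C)%C <= ((1 + n%:R * b^-1)%:C)%C.
  by rewrite rmorphD /= rmorphM /= rmorph_nat rmorphMn.
move: h1; rewrite lecR -mulr_natl => h.
set x := eta - eps - b^-1 in hpos *.
have hx : n%:R * x <= 1 by rewrite /x; nra.
have -> : n%:R = n%:R * x * x^-1 by rewrite mulfK // gt_eqF.
rewrite mulr1 -[X in _ <= X]mul1r; apply: ler_wpM2r => //; by rewrite invr_ge0 ltW.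
Qed.
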